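(* Let $\Omega$ be a finite set, let $G \leq \mathrm{Sym}(\Omega)$ be semiprimitive and let $\Sigma$ be a non-trivial $G$-invariant partition of $\Omega$. Then (i) $D(G) \leq D(G^\Sigma)$; (ii) if $|\sigma| \geq |\Sigma|-1$ for all $\sigma \in \Sigma$, then $D(G)=2$.
   Context: For $G \leq \mathrm{Sym}(\Omega)$, the distinguishing number $D(G)$ is the least positive integer $k$ such that there is a partition of $\Omega$ into $k$ parts for which only the identity of $G$ stabilises every part setwise. A permutation group is semiprimitive if every normal subgroup is transitive or semiregular (semiregular: all point stabilisers trivial). A $G$-invariant partition $\Sigma$ is non-trivial if it has more than one part and not all parts are singletons; $G^\Sigma$ denotes the permutation group induced by $G$ on the set of parts $\Sigma$. *)

(* Defs.v *)
From mathcomp Require Import all_boot all_fingroup.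
Set Implicit Arguments. Unset Strict Implicit. Unset Printing Implicit Defensive.
Local Open Scope group_scope.

Section Defs.
Variable T : finType.

Definition dist_partition (G : {set {perm T}}) (k : nat) : Prop :=
  exists P : {set {set T}},
    [/\ partition P [set: T], #|P| = k &
        forall g, g \in G -> (forall B, B \in P -> g @: B = B) -> g = 1].

Definition is_dist_number (G : {set {perm T}}) (d : nat) : Prop :=
  [/\ 0 < d, dist_partition G d &
      forall k, 0 < k -> dist_partition G k -> d <= k].

(* Distinguishing partitions for the induced group G^Sigma on the set of parts
   Sigma: a partition Q of Sigma into exactly k parts such that the only
   element of G^Sigma fixing every part of Q setwise is the identity of
   G^Sigma, i.e. every g in G stabilising every part of Q acts trivially
   on Sigma. *)
Definition dist_partition_induced (G : {set {perm T}}) (Sigma : {set {set T}})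
    (k : nat) : Prop :=
  exists Q : {set {set {set T}}},
    [/\ partition Q Sigma, #|Q| = k &
        forall g, g \in G ->
          (forall C, C \in Q -> [set g @: B | B : {set T} in C] = C) ->
          forall B, B \in Sigma -> g @: B = B].

Definition is_dist_number_induced (G : {set {perm T}}) (Sigma : {set {set T}})
    (d : nat) : Prop :=
  [/\ 0 < d, dist_partition_induced G Sigma d &
      forall k, 0 < k -> dist_partition_induced G Sigma k -> d <= k].

Definition semiregular (N : {set {perm T}}) : Prop :=
  forall x : T, forall n, n \in N -> n x = x -> n = 1.

Definition semiprimitive (G : {group {perm T}}) : Prop :=
  [transitive G, on [set: T] | 'P] /\
  forall N : {group {perm T}}, N <| G ->
    [transitive N, on [set: T] | 'P] \/ semiregular N.

Definition invariant_partition (G : {set {perm T}}) (Sigma : {set {set T}}) :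
    Prop :=
  partition Sigma [set: T] /\
  forall g B, g \in G -> B \in Sigma -> g @: B \in Sigma.

Definition nontrivial_partition (Sigma : {set {set T}}) : Prop :=
  1 < #|Sigma| /\ exists2 B, B \in Sigma & 1 < #|B|.

End Defs.

(* Main.v *)
Require Import Defs.
From mathcomp Require Import all_boot all_fingroup.
From Stdlib Require Import Classical.
Set Implicit Arguments. Unset Strict Implicit. Unset Printing Implicit Defensive.
Local Open Scope group_scope.

Lemma ex_min_nat (P : nat -> Prop) : (exists n, P n) ->
  exists m, P m /\ forall k, P k -> m <= k.
Proof.
case=> n; elim: n {-2}n (leqnn n) => [|n IH] m Hm Pm.
  exists m; split=> // k _; move: Hm; rewrite leqn0 => /eqP ->; done.
case: (classic (exists k, k < m /\ P k)) => [[k [Hk Pk]]|H].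
  by apply: (IH k) => //; rewrite -ltnS (leq_trans Hk).
exists m; split=> // k Pk; rewrite leqNgt; apply/negP => Hk; apply: H; by exists k.
Qed.

Section S.
Variables (T : finType) (G : {group {perm T}}) (Sigma : {set {set T}}).
Hypotheses (semi : semiprimitive G) (inv : invariant_partition G Sigma)
  (nt : nontrivial_partition Sigma).

Let partS : partition Sigma [set: T] := inv.1.
Let tiS : trivIset Sigma. Proof. by case/and3P: partS. Qed.
Let covS : cover Sigma = [set: T]. Proof. exact: cover_partition partS. Qed.
Let nS0 : set0 \notin Sigma. Proof. by case/and3P: partS. Qed.
Let gB_in g B : g \in G -> B \in Sigma -> g @: B \in Sigma.
Proof. exact: inv.2. Qed.

Lemma pS_in t : pblock Sigma t \in Sigma.
Proof. by apply: pblock_mem; rewrite covS inE. Qed.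
Lemma mem_pS t : t \in pblock Sigma t.
Proof. by rewrite mem_pblock covS inE. Qed.
Lemma pS_def B t : B \in Sigma -> t \in B -> pblock Sigma t = B.
Proof. exact: def_pblock. Qed.

Lemma pblock_img g t : g \in G -> g @: pblock Sigma t = pblock Sigma (g t).
Proof.
move=> gG; apply/esym/pS_def; first by apply: gB_in; rewrite ?pS_in.
by apply: imset_f; apply: mem_pS.
Qed.

Lemma imset_sub_eq (aT : finType) (f : aT -> aT) (C : {set aT}) :
  injective f -> f @: C \subset C -> f @: C = C.
Proof. move=> fi fs; apply/eqP; rewrite eqEcard fs /=. rewrite card_imset //. Qed.

Lemma transG x y : exists2 g, g \in G & g x = y.
Proof.
have := atransP semi.1 x (in_setT x) => e; have : y \in orbit 'P G x by rewrite e inE.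
case/orbitP => g gG <-.
by exists g.
Qed.

Lemma notrans (H : {set {perm T}}) :
  (forall x y, exists2 g, g \in H & g x = y) ->
  exists g, g \in H /\ exists2 B, B \in Sigma & g @: B != B.
Proof.
move=> Ht; have /card_gt1P[B1 [B2 [B1S B2S nB]]] := nt.1.
have /set0Pn[x xB1] : B1 != set0 by apply: contraNneq nS0 => <-.
have /set0Pn[y yB2] : B2 != set0 by apply: contraNneq nS0 => <-.
have [g gH gxy] := Ht x y; exists g; split=> //; exists B1 => //.
apply/negP => /eqP e; move: nB; apply/negP; rewrite negbK.
have yB1 : y \in B1 by rewrite -e -gxy imset_f.
by rewrite -(pS_def B1S yB1) (pS_def B2S yB2).
Qed.

Lemma Ksemireg g x : g \in G -> (forall B, B \in Sigma -> g @: B = B) ->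
  g x = x -> g = 1.
Proof.
move=> gG fixB gx.
pose K := (G :&: 'C(Sigma | 'P^*))%G.
have nK : K <| G.
  rewrite /K /=; apply: norm_normalI.
  have HN := astab_norm ('P^*)%act Sigma; apply: (subset_trans _ HN).
  apply/subsetP => h hG; apply/astabsP => B /=.
  rewrite setactE /=; apply/idP/idP => [|BS]; last by apply: gB_in.
  move=> hB; have := gB_in (groupVr hG) hB.
  rewrite -imset_comp.
  have -> : [set ((fun x : T => h^-1 x) \o (fun x => aperm x h)) x | x in B] = B.
    rewrite -[RHS]imset_id; apply: eq_imset => z /=; by rewrite apermE permK.
  done.
have inK h : h \in G -> (forall B, B \in Sigma -> h @: B = B) -> h \in K.
  move=> hG hB; rewrite inE hG; apply/astabP => B BS /=.
  by rewrite setactE -{2}(hB B BS).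
case: (semi.2 K nK) => [trK|sK]; last by apply: (sK x) => //; apply: inK.
exfalso.
have [h [hK [B BS nB]]] : exists h, h \in K /\ exists2 B, B \in Sigma & h @: B != B.
  apply: notrans => u v.
  have e := atransP trK u (in_setT u); have : v \in orbit 'P K u by rewrite e inE.
  case/orbitP => h hK <-.
  by exists h.
move: hK; rewrite inE => /andP[_ /astabP /(_ B BS)] /=; rewrite setactE.
move=> e; case/negP: nB; apply/eqP; rewrite -{2}e.
by [].
Qed.


Lemma label_dist (L : finType) (l : T -> L) :
  (forall g, g \in G -> (forall t, l (g t) = l t) -> g = 1) ->
  dist_partition G #|l @: [set: T]|.
Proof.
move=> Hl.
pose h := fun v : L => [set y | l y == v].
have eP : preim_partition l [set: T] = h @: (l @: [set: T]).
  rewrite -imset_comp; apply: eq_imset => x; apply/setP => y.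
  by rewrite !inE eq_sym.
exists (preim_partition l [set: T]); split.
- exact: preim_partitionP.
- rewrite eP; apply: card_in_imset.
  move=> v w /imsetP[x _ ->] _ e.
  have : x \in h (l x) by rewrite inE.
  by rewrite e inE => /eqP.
- move=> g gG HB; apply: Hl => // t.
  have : h (l t) \in preim_partition l [set: T].
    by rewrite eP; apply: imset_f; apply: imset_f.
  move/HB => e.
  have : g t \in g @: h (l t) by apply: imset_f; rewrite inE.
  by rewrite e inE => /eqP.
Qed.

Lemma two_points : exists x y : T, x != y.
Proof.
case: nt => _ [B _ /card_gt1P[x [y [_ _ nxy]]]]; by exists x, y.
Qed.

Lemma dist1_false : ~ dist_partition G 1.
Proof.
case=> P [pP /eqP /cards1P[B eB] dP].
have BT : B = [set: T] by have := cover_partition pP; rewrite eB cover1.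
have all1 g : g \in G -> g = 1.
  move=> gG; apply: dP => // C; rewrite eB inE => /eqP ->; rewrite BT.
  by apply: imset_sub_eq; [exact: perm_inj | exact: subsetT].
have [x [y nxy]] := two_points.
have [g gG gxy] := transG x y.
by move: nxy; rewrite -gxy (all1 g gG) perm1 eqxx.
Qed.

Lemma imsetS_eq g (C : {set {set T}}) : g \in G ->
  (forall B, B \in C -> g @: B \in C) -> [set g @: B | B : {set T} in C] = C.
Proof.
move=> gG HC; apply: imset_sub_eq; first exact: imset_inj perm_inj.
by apply/subsetP => _ /imsetP[B BC ->]; apply: HC.
Qed.

Lemma dist_induced_gt1 k : dist_partition_induced G Sigma k -> 1 < k.
Proof.
case=> Q [pQ <- dQ]; rewrite ltnNge; apply/negP => le1.
have covQ := cover_partition pQ.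
have [B0 B0S] : exists B, B \in Sigma.
  by have /card_gt1P[B [_ [BS _ _]]] := nt.1; exists B.
have pQ0 : pblock Q B0 \in Q by apply: pblock_mem; rewrite covQ.
have allC C : C \in Q -> C = pblock Q B0.
  by move=> CQ; move/card_le1P: le1 => /(_ _ pQ0 C); rewrite CQ inE => /esym/eqP.
have all_fix g : g \in G -> forall B, B \in Sigma -> g @: B = B.
  move=> gG; apply: dQ => // C CQ; apply: imsetS_eq => // B BC.
  have BS : B \in Sigma by rewrite -covQ; apply/bigcupP; exists C.
  have gBS := gB_in gG BS.
  move: gBS; rewrite -covQ => /bigcupP[C' C'Q gBC'].
  by rewrite (allC _ CQ) -(allC _ C'Q).
have [g [gG [B BS nB]]] := notrans transG.
by move: nB; rewrite all_fix // eqxx.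
Qed.

Lemma dist_from_induced k : dist_partition_induced G Sigma k -> dist_partition G k.
Proof.
move=> Hk; have k1 := dist_induced_gt1 Hk; case: Hk => Q [pQ cQ dQ].
have covQ := cover_partition pQ.
have [_ tiQ nQ0] := and3P pQ.
have [B0 B0S /card_gt1P[x [y [xB0 yB0 nxy]]]] := nt.2.
have pQ0 : pblock Q B0 \in Q by apply: pblock_mem; rewrite covQ.
have [C2 C2Q nC2] : exists2 C2, C2 \in Q & C2 != pblock Q B0.
  move: k1; rewrite -cQ => /card_gt1P[C [C' [CQ C'Q nCC']]].
  case: (eqVneq C (pblock Q B0)) => [eC|nC]; last by exists C.
  by exists C' => //; rewrite -eC eq_sym.
pose l t := if t == x then C2 else pblock Q (pblock Sigma t).
have ynx : y != x by rewrite eq_sym.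
have ex_t B : B \in Sigma -> exists2 t, t \in B & t != x.
  move=> BS; case: (boolP (x \in B)) => xB.
    exists y => //; rewrite -(pS_def BS xB) (pS_def B0S xB0) //.
  have /set0Pn[t tB] : B != set0 by apply: contraNneq nS0 => <-.
  by exists t => //; apply: contraNneq xB => <-.
have lt t : t != x -> l t = pblock Q (pblock Sigma t) by rewrite /l => /negbTE ->.
have pQB C B : C \in Q -> B \in C -> pblock Q B = C by move=> CQ BC; apply: def_pblock.
have BinS C B : C \in Q -> B \in C -> B \in Sigma.
  by move=> CQ BC; rewrite -covQ; apply/bigcupP; exists C.
have imQ : l @: [set: T] = Q.
  apply/setP => C; apply/imsetP/idP.
  - case=> t _ ->; rewrite /l; case: ifP => _ //; apply: pblock_mem.
    by rewrite covQ pS_in.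
  - move=> CQ; have /set0Pn[B BC] : C != set0 by apply: contraNneq nQ0 => <-.
    have BS := BinS _ _ CQ BC; have [t tB tx] := ex_t B BS.
    by exists t => //; rewrite lt // (pS_def BS tB) (pQB C B).
rewrite -cQ -imQ; apply: label_dist => g gG Hl.
have lx : l x = C2 by rewrite /l eqxx.
have gxx : g x = x.
  apply/eqP/negPn/negP => ngx.
  have gyx : g y != x.
    apply/eqP => gy; have := Hl y; rewrite gy lx (lt _ ynx) (pS_def B0S yB0) => e.
    by move: nC2; rewrite e eqxx.
  have := Hl x; rewrite (lt _ ngx) lx -pblock_img // (pS_def B0S xB0) => e1.
  have := Hl y; rewrite (lt _ gyx) (lt _ ynx) -pblock_img // (pS_def B0S yB0) => e2.
  by move: nC2; rewrite -e1 e2 eqxx.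
apply: (Ksemireg gG _ gxx).
apply: dQ => // C CQ; apply: imsetS_eq => // B BC.
have BS := BinS _ _ CQ BC; have [t tB tx] := ex_t B BS.
have gtx : g t != x.
  by apply: contraNneq tx => e; apply/eqP; apply: (@perm_inj _ g); rewrite e gxx.
have := Hl t; rewrite (lt _ gtx) (lt _ tx) -pblock_img // (pS_def BS tB) (pQB C B CQ BC) => e.
by rewrite -e mem_pblock covQ gB_in.
Qed.

Local Open Scope nat_scope.
Lemma dist2 : (forall sigma, sigma \in Sigma -> #|Sigma| - 1 <= #|sigma|) ->
  dist_partition G 2.
Proof.
move=> Hs.
pose idx B := index B (enum Sigma).
pose l t := index t (enum (pblock Sigma t)) < idx (pblock Sigma t).
pose X (B : {set T}) := [set t in B | l t].
have idx_lt B : B \in Sigma -> idx B < #|Sigma|.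
  by move=> BS; rewrite cardE index_mem mem_enum.
have cntX B : B \in Sigma -> #|X B| = idx B.
  move=> BS.
  have -> : X B = [set t | t \in take (idx B) (enum B)].
    apply/setP => t; rewrite !inE; case: (boolP (t \in B)) => tB /=.
      by rewrite /l (pS_def BS tB) in_take // mem_enum.
    by apply/esym/negP => /mem_take; rewrite mem_enum (negbTE tB).
  rewrite cardsE; move/card_uniqP: (take_uniq (idx B) (enum_uniq (mem B))) => ->.
  rewrite size_take -cardE; case: ifP => // /negbT; rewrite -leqNgt => le.
  apply/eqP; rewrite eqn_leq le /=.
  have := Hs B BS; have := idx_lt B BS; case: #|Sigma| => // n; rewrite ltnS subn1 /=.
  exact: leq_trans.
have uS := enum_uniq (mem Sigma).
have szS : size (enum Sigma) = #|Sigma| by rewrite cardE.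
have [B1S idx1] : nth set0 (enum Sigma) 1 \in Sigma /\ idx (nth set0 (enum Sigma) 1) = 1.
  by split; [rewrite -mem_enum mem_nth // szS nt.1 | rewrite /idx index_uniq // szS nt.1].
have [B0S idx0] : nth set0 (enum Sigma) 0 \in Sigma /\ idx (nth set0 (enum Sigma) 0) = 0.
  by split; [rewrite -mem_enum mem_nth // szS ltnW // nt.1 | rewrite /idx index_uniq // szS ltnW // nt.1].
set B1 := nth set0 (enum Sigma) 1 in B1S idx1.
set B0 := nth set0 (enum Sigma) 0 in B0S idx0.
have /cards1P[x eX] : #|X B1| == 1 by rewrite cntX // idx1.
have xX : x \in X B1 by rewrite eX inE.
have im2 : l @: [set: T] = [set: bool].
  apply/setP => b; rewrite inE; apply/imsetP; case: b.
    by exists x => //; move: xX; rewrite inE => /andP[].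
  have /set0Pn[t tB] : B0 != set0 by apply: contraNneq nS0 => <-.
  by exists t => //; rewrite /l (pS_def B0S tB) idx0 ltn0.
rewrite -(card_bool) -cardsT -im2; apply: label_dist => g gG Hl.
have gX B : B \in Sigma -> g @: X B = X (g @: B).
  move=> BS; apply/setP => u; apply/imsetP/idP.
  - by case=> t; rewrite inE => /andP[tB lt] ->; rewrite inE imset_f // Hl lt.
  - rewrite inE => /andP[/imsetP[t tB ->] lgt]; exists t => //.
    by rewrite inE tB -Hl.
have fixB B : B \in Sigma -> g @: B = B.
  move=> BS; have gBS := gB_in gG BS.
  have e : idx (g @: B) = idx B by rewrite -!cntX // -gX // card_imset //; exact: perm_inj.
  by rewrite -(nth_index set0 (_ : g @: B \in enum Sigma)) ?mem_enum // -/(idx _) e /idx nth_index ?mem_enum.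
apply: (Ksemireg gG fixB (x := x)).
have : g x \in g @: X B1 by apply: imset_f.
by rewrite gX // fixB // eX inE => /eqP.
Qed.

Lemma induced_exists : exists k, 0 < k /\ dist_partition_induced G Sigma k.
Proof.
pose Q0 := preim_partition (@id {set T}) Sigma.
have pQ0 : partition Q0 Sigma by apply: preim_partitionP.
have covQ := cover_partition pQ0.
have [B0 B0S] : exists B, B \in Sigma.
  by have /card_gt1P[B [_ [BS _ _]]] := nt.1; exists B.
exists #|Q0|; split.
  by apply/card_gt0P; exists (pblock Q0 B0); apply: pblock_mem; rewrite covQ.
exists Q0; split=> // g gG dQ B BS.
have CQ : pblock Q0 B \in Q0 by apply: pblock_mem; rewrite covQ.
have := dQ _ CQ => e.
have : g @: B \in [set g @: B' | B' : {set T} in pblock Q0 B].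
  by apply: imset_f; rewrite mem_pblock covQ.
rewrite e /Q0 /preim_partition pblock_equivalence_partition //.
- by move=> /eqP.
- by move=> x y z _ _ _; split=> // /eqP ->.
- exact: gB_in.
Qed.

End S.

Theorem lemma2p2 (T : finType) (G : {group {perm T}}) (Sigma : {set {set T}}) :
  semiprimitive G -> invariant_partition G Sigma -> nontrivial_partition Sigma ->
  (exists d dS, [/\ is_dist_number G d, is_dist_number_induced G Sigma dS
                   & d <= dS])
  /\
  ((forall sigma, sigma \in Sigma -> #|Sigma| - 1 <= #|sigma|) ->
   is_dist_number G 2).
Proof.
move=> semi inv nt; split.
- have [dS [[dS0 HdS] mdS]] := ex_min_nat
     (P := fun k => 0 < k /\ dist_partition_induced G Sigma k) (induced_exists inv nt).
  have HdG := dist_from_induced semi inv nt HdS.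
  have [d [[d0 Hd] md]] := ex_min_nat
     (P := fun k => 0 < k /\ dist_partition G k) (ex_intro _ dS (conj dS0 HdG)).
  exists d, dS; split.
  + by split=> // k k0 Hk; apply: md.
  + by split=> // k k0 Hk; apply: mdS.
  + by apply: md.
- move=> Hs; split=> //; first exact: (dist2 semi inv nt Hs).
  move=> [|[|k]] // _ H1; exfalso; exact: (dist1_false semi nt H1).
Qed.
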